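(* Let $1\le d<n$, $r=d(n-d)$, $\mathfrak C$ a maximal chain in $I(d,n)$ and $1\le t\le r-1$. (i) If $F_t(\mathfrak C)\neq0$, then $\sigma_{F_t(\mathfrak C)}=\sigma_{\mathfrak C}s_t$ and $\ell(\sigma_{F_t(\mathfrak C)})=\ell(\sigma_{\mathfrak C})+1$; in particular $\sigma_{F_t(\mathfrak C)}>_R\sigma_{\mathfrak C}$. (ii) If $E_t(\mathfrak C)\neq0$, then $\sigma_{E_t(\mathfrak C)}=\sigma_{\mathfrak C}s_t$ and $\ell(\sigma_{E_t(\mathfrak C)})=\ell(\sigma_{\mathfrak C})-1$; in particular $\sigma_{E_t(\mathfrak C)}<_R\sigma_{\mathfrak C}$.
   Context: $I(d,n)$: $d$-subsets of $\{1,\dots,n\}$ as increasing sequences, ordered by $\underline i\le\underline j$ iff $i_k\le j_k$ for all $k$. Maximal chains $\mathfrak C:\underline i_r>\cdots>\underline i_0$ (from $(n-d+1)\cdots n$ to $12\cdots d$); chains compared lexicographically via concatenated strings $\underline i_r\cdots\underline i_0$; $\mathfrak C_{\mathrm{right}}$ the smallest. Root operators $f_{s,h}$ ($1\le h\le d$, $h\le s<n-d+h$): $f_{s,h}(i_1\cdots i_d)$ replaces $i_h=s$ by $s+1$ if $i_h=s$ and ($h=d$ or $i_{h+1}\ge s+2$), else $0$. Along a maximal chain $\underline i_t=f_{s_t,h_t}(\underline i_{t-1})$, each admissible pair occurring exactly once; $\tilde f_t:=f_{s_t,h_t}$ for $\mathfrak C_{\mathrm{right}}$; $\sigma_{\mathfrak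 C}\in\mathsf S_r$ is defined by: the operator from $\underline i_{t-1}$ to $\underline i_t$ in $\mathfrak C$ is $\tilde f_{\sigma_{\mathfrak C}(t)}$. For $1\le t\le r-1$, the Bruhat interval $[\underline i_{t-1},\underline i_{t+1}]$ has 3 or 4 elements; if 4, say $\{\underline i_{t-1},\underline i_t,\underline i'_t,\underline i_{t+1}\}$, then $\underline i_t$ is a right peak if $\underline i'_t>_{lex}\underline i_t$ and a left peak if $\underline i_t>_{lex}\underline i'_t$. $F_t(\mathfrak C)$ (resp. $E_t(\mathfrak C)$) is the chain obtained by replacing $\underline i_t$ by $\underline i'_t$ if $\underline i_t$ is a right (resp. left) peak, and $0$ otherwise. $s_t=(t,t+1)\in\mathsf S_r$, $\ell$ is Coxeter length on $\mathsf S_r$, and $\le_R$ is the right weak Bruhat order ($u\le_R v$ iff some reduced word of $v$ begins with a reduced word of $u$). *)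

(* Defs.v *)
From mathcomp Require Import all_boot all_fingroup.
From Stdlib Require Import ClassicalEpsilon.

Set Implicit Arguments.
Unset Strict Implicit.
Unset Printing Implicit Defensive.

(* I(d,n): d-subsets of {1..n} as increasing sequences (seq nat).      *)

Definition inI (d n : nat) (x : seq nat) : bool :=
  [&& size x == d, sorted ltn x & all (fun a => 0 < a <= n) x].

Definition enumI (d n : nat) : seq (seq nat) :=
  [seq [seq (val i).+1 | i <- enum (A : {set 'I_n})] | A : {set 'I_n} <- enum [set A : {set 'I_n} | #|A| == d]].

Definition leI (x y : seq nat) : bool := all2 leq x y.
Definition ltI (x y : seq nat) : bool := leI x y && (x != y).

Definition botI (d : nat) : seq nat := iota 1 d.
Definition topI (d n : nat) : seq nat := iota (n - d).+1 d.

Definition coversI (d n : nat) (x y : seq nat) : bool :=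
  [&& inI d n x, inI d n y, ltI x y &
      ~~ has (fun z => ltI x z && ltI z y) (enumI d n)].

(* A maximal chain i_r > ... > i_0 is stored as the list
   [:: i_0; i_1; ...; i_r] (i_0 = 12..d, i_r = (n-d+1)..n),
   each element covering the previous one. *)
Definition maxchain (d n : nat) (C : seq (seq nat)) : bool :=
  if C is x :: C' then
    [&& x == botI d, last x C' == topI d n & path (coversI d n) x C']
  else false.

Definition at_ (C : seq (seq nat)) (t : nat) : seq nat := nth [::] C t.

Fixpoint lexlt (s t : seq nat) : bool :=
  match s, t with
  | a :: s', b :: t' => (a < b) || ((a == b) && lexlt s' t')
  | _, _ => false
  end.
Definition lexle (s t : seq nat) : bool := lexlt s t || (s == t).

(* chains compared lexicographically via the concatenated strings i_r ... i_0 *)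
Definition chainstr (C : seq (seq nat)) : seq nat := flatten (rev C).

Definition is_Cright (d n : nat) (C : seq (seq nat)) : Prop :=
  maxchain d n C /\
  forall C', maxchain d n C' -> lexle (chainstr C) (chainstr C').

Definition Cright (d n : nat) : seq (seq nat) :=
  epsilon (inhabits [::]) (is_Cright d n).

(* Root operators f_{s,h}; None plays the role of 0.                   *)
(* x = i_1 ... i_d is stored 0-based: i_h = nth 0 x h.-1.              *)

Definition rootop (d : nat) (p : nat * nat) (x : seq nat) : option (seq nat) :=
  let: (s, h) := p in
  if (nth 0 x h.-1 == s) && ((h == d) || (s.+2 <= nth 0 x h))
  then Some (set_nth 0 x h.-1 s.+1) else None.

Definition admissible (d n : nat) : seq (nat * nat) :=
  [seq (s, h) | h <- iota 1 d, s <- iota h (n - d)].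

Definition steppair (d n : nat) (x y : seq nat) : nat * nat :=
  nth (0, 0) [seq p <- admissible d n | rootop d p x == Some y] 0.

(* \tilde f_{j+1} (0-based index j): the operator from i_j to i_{j+1}
   along C_right *)
Definition tildef (d n j : nat) : nat * nat :=
  steppair d n (at_ (Cright d n) j) (at_ (Cright d n) j.+1).

(* Permutations.  'S_r acts on 'I_r = {0..r-1}; the paper's index t in *)
(* {1..r} corresponds to t-1.  permcomp u v is the composite u o v.       *)

Definition permcomp (r : nat) (u v : 'S_r) : 'S_r := (v * u)%g.

(* sadj r i = the simple transposition (i, i+1) in 0-based indexing,
   i.e. the paper's s_{i+1} = (i+1, i+2) *)
Definition sadj (r i : nat) : 'S_r :=
  match @insub nat (fun k => k < r) 'I_r i, @insub nat (fun k => k < r) 'I_r i.+1 with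
  | Some a, Some b => tperm a b
  | _, _ => 1%g
  end.

Definition sigma_spec (d n : nat) (C : seq (seq nat)) (s : 'S_(d * (n - d))) : bool :=
  [forall k : 'I_(d * (n - d)),
     rootop d (tildef d n (s k)) (at_ C k) == Some (at_ C k.+1)].
Arguments sigma_spec : clear implicits.

Definition sigmaC (d n : nat) (C : seq (seq nat)) : 'S_(d * (n - d)) :=
  odflt 1%g [pick s | sigma_spec d n C s].
Arguments sigmaC : clear implicits.

Definition validword (r : nat) (w : seq nat) : bool := all (fun i => i.+1 < r) w.
Definition wordprod (r : nat) (w : seq nat) : 'S_r :=
  foldr (fun i acc => permcomp (sadj r i) acc) 1%g w.

Definition is_coxlen (r : nat) (s : 'S_r) (k : nat) : Prop :=
  (exists w, [/\ validword r w, size w = k & wordprod r w = s]) /\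
  (forall w, validword r w -> wordprod r w = s -> k <= size w).

Definition coxlen (r : nat) (s : 'S_r) : nat := epsilon (inhabits 0) (is_coxlen s).

Definition reduced_word (r : nat) (w : seq nat) (s : 'S_r) : Prop :=
  [/\ validword r w, wordprod r w = s & size w = coxlen s].

Definition leR (r : nat) (u v : 'S_r) : Prop :=
  exists w1 w2, reduced_word w1 u /\ reduced_word (w1 ++ w2) v.
Definition ltR (r : nat) (u v : 'S_r) : Prop := leR u v /\ u <> v.

Definition intervalI (d n : nat) (x y : seq nat) : seq (seq nat) :=
  [seq z <- enumI d n | leI x z && leI z y].

Definition four (d n : nat) (C : seq (seq nat)) (t : nat) : bool :=
  size (intervalI d n (at_ C t.-1) (at_ C t.+1)) == 4.

Definition iprime (d n : nat) (C : seq (seq nat)) (t : nat) : seq nat :=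
  head [::] [seq z <- intervalI d n (at_ C t.-1) (at_ C t.+1)
             | z \notin [:: (at_ C t.-1); (at_ C t); (at_ C t.+1)]].

Definition rightpeak (d n : nat) (C : seq (seq nat)) (t : nat) : bool :=
  four d n C t && lexlt (at_ C t) (iprime d n C t).
Definition leftpeak (d n : nat) (C : seq (seq nat)) (t : nat) : bool :=
  four d n C t && lexlt (iprime d n C t) (at_ C t).

Definition Fop (d n : nat) (C : seq (seq nat)) (t : nat) : option (seq (seq nat)) :=
  if rightpeak d n C t then Some (set_nth [::] C t (iprime d n C t)) else None.
Definition Eop (d n : nat) (C : seq (seq nat)) (t : nat) : option (seq (seq nat)) :=
  if leftpeak d n C t then Some (set_nth [::] C t (iprime d n C t)) else None.

(* Main.v *)
Require Import Defs.
From mathcomp Require Import all_boot all_fingroup.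
From mathcomp Require Import zify.
From Stdlib Require Import ClassicalEpsilon Classical.
Set Implicit Arguments. Unset Strict Implicit. Unset Printing Implicit Defensive.

Ltac eqs_to_props :=
  repeat match goal with
  | H : is_true (_ == _) |- _ => move/eqP: H => H
  | H : (_ == _) = true |- _ => move/eqP: H => H
  | H : (_ == _) = false |- _ => move/eqP: H => H
  | H : is_true (_ != _) |- _ => move/eqP: H => H
  end.
Ltac natcase := (repeat case: ifP); intros; eqs_to_props; try subst; lia.

Definition inc (x : seq nat) i := set_nth 0 x i (nth 0 x i).+1.

Lemma size_inc x i : i < size x -> size (inc x i) = size x.
Proof. by move=> h; rewrite size_set_nth; apply/maxn_idPr. Qed.

Lemma nth_inc x i k : nth 0 (inc x i) k = if k == i then (nth 0 x i).+1 else nth 0 x k.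
Proof. by rewrite nth_set_nth. Qed.

Lemma inc_cons a x i : inc (a :: x) i.+1 = a :: inc x i.
Proof. by []. Qed.

Lemma inc_comm x a b : a != b -> inc (inc x a) b = inc (inc x b) a.
Proof.
move=> ab; apply: (@eq_from_nth _ 0).
  by rewrite !size_set_nth maxnCA.
move=> k _; rewrite !nth_inc; move: ab; natcase.
Qed.

Lemma sumn_inc x i : i < size x -> sumn (inc x i) = (sumn x).+1.
Proof.
elim: x i => [|a x IH] [|i] //= h.
by rewrite -/(inc x i) IH // addnS.
Qed.

Lemma lexlt_irr s : ~~ lexlt s s.
Proof. by elim: s => //= a s IH; rewrite ltnn eqxx. Qed.

Lemma lexlt_asym s t : lexlt s t -> ~~ lexlt t s.
Proof.
elim: s t => [|a s IH] [|b t] //= /orP[ab|/andP[/eqP-> H]].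
- by rewrite ltnNge (ltnW ab) /= eq_sym (ltn_eqF ab).
- by rewrite ltnn eqxx /= IH.
Qed.

Lemma lexlt_total s t : size s = size t -> [|| lexlt s t, s == t | lexlt t s].
Proof.
elim: s t => [|a s IH] [|b t] // [] /IH H.
case: (ltngtP a b) => [ab|ab|<-]; first by rewrite /= ab.
  by rewrite /= ab !orbT.
by rewrite /= eqseq_cons eqxx ltnn /=.
Qed.

Lemma lexlt_inc x a b : a < b -> b < size x -> lexlt (inc x b) (inc x a).
Proof.
elim: x a b => [|c x IH] [|a] [|b] //=.
- by move=> _ _; rewrite ltnSn.
- by move=> ab hb; rewrite -/(inc x a) -/(inc x b) eqxx ltnn /= IH.
Qed.

Lemma lexlt_catl p s t : lexlt (p ++ s) (p ++ t) = lexlt s t.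
Proof. by elim: p => //= a p ->; rewrite ltnn eqxx. Qed.

Lemma lexlt_catr u v s s' : size u = size v -> lexlt u v -> lexlt (u ++ s) (v ++ s').
Proof.
elim: u v => [|a u IH] [|b v] //= [] /IH H /orP[->//|/andP[-> /H ->]].
by rewrite orbT.
Qed.

Fixpoint code N (s : seq nat) : nat :=
  if s is a :: s' then a * N ^ size s' + code N s' else 0.

Lemma code_lt N s : all (fun a => a < N) s -> code N s < N ^ size s.
Proof.
elim: s => [|a s IH] //= /andP[aN /IH h].
rewrite expnS; set P := N ^ size s in h *; nia.
Qed.

Lemma lexlt_code N s t : size s = size t -> all (fun a => a < N) s ->
  all (fun a => a < N) t -> lexlt s t -> code N s < code N t.
Proof.
elim: s t => [|a s IH] [|b t] //= [] sz /andP[aN aS] /andP[bN bT] /orP[ab|/andP[/eqP<- H]].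
  have := code_lt aS; rewrite sz => h.
  set P := N ^ size t in h *; nia.
by rewrite sz ltn_add2l IH.
Qed.

Lemma lexlt_setnth C t z : t < size C -> size z = size (at_ C t) ->
  lexlt z (at_ C t) -> lexlt (chainstr (set_nth [::] C t z)) (chainstr C).
Proof.
move=> ht sz H.
have EC : C = set_nth [::] C t (at_ C t).
  apply: (@eq_from_nth _ [::]); first by rewrite size_set_nth; apply/esym/maxn_idPr.
  by move=> k _; rewrite nth_set_nth /=; case: eqP => // ->.
rewrite {2}EC /chainstr !set_nthE ht !rev_cat !flatten_cat !rev_cons !flatten_rcons.
by rewrite -!catA lexlt_catl; apply: lexlt_catr.
Qed.

Section Cox.
Variable r : nat.
Implicit Types (s t : 'S_r).
Local Open Scope group_scope.

Definition invset s : {set 'I_r * 'I_r} := [set p : 'I_r * 'I_r | (p.1 < p.2) && (s p.2 < s p.1)].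
Definition L s := #|invset s|.

Lemma permcompE (u v : 'S_r) (x : 'I_r) : permcomp u v x = u (v x).
Proof. by rewrite /permcomp permM. Qed.

Lemma L_inv_le s : L s <= L s^-1.
Proof.
rewrite /L.
have inj : injective (fun p : 'I_r * 'I_r => (s p.2, s p.1)).
  by move=> [a b] [c e] /= [] /perm_inj -> /perm_inj ->.
rewrite -(card_imset _ inj); apply: subset_leq_card.
apply/subsetP => q /imsetP [[a b] Hp ->]; move: Hp; rewrite !inE /= !permK.
by case/andP => -> ->.
Qed.

Lemma L_inv s : L s^-1 = L s.
Proof. by apply/eqP; rewrite eqn_leq L_inv_le -{2}(invgK s) L_inv_le. Qed.

Lemma tpermv (i j z : 'I_r) :
  val (tperm i j z) = if val z == val i then val j else if val z == val j then val i else val z.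
Proof.
case: tpermP => [->|->|h1 h2]; rewrite ?eqxx //.
  by case: eqP => // /val_inj ->.
case: eqP => [/val_inj //|_]; case: eqP => [/val_inj //|_] //.
Qed.

Lemma order_pres (i j : 'I_r) (hij : val j = i.+1) (x y : 'I_r) :
  ~~ ((x == i) && (y == j)) -> ~~ ((x == j) && (y == i)) -> x != y ->
  (tperm i j x < tperm i j y) = (x < y).
Proof.
have hj : nat_of_ord j = i.+1 := hij.
rewrite -!val_eqE /= !tpermv /= hj.
case: (val x =P val i); case: (val y =P val i); case: (val x =P i.+1); case: (val y =P i.+1);
  move=> /= *; apply/idP/idP; lia.
Qed.

Lemma inv_pres t (i j : 'I_r) (hij : val j = i.+1) (a b : 'I_r) : a < b ->
  ~~ ((t a == i) && (t b == j)) -> ~~ ((t a == j) && (t b == i)) ->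
  ((a, b) \in invset (permcomp (tperm i j) t)) = ((a, b) \in invset t).
Proof.
move=> ab h1 h2; rewrite !inE /= ab /= !permcompE order_pres //.
- by rewrite andbC.
- by rewrite andbC.
- by rewrite (inj_eq perm_inj); apply: contraTneq ab => ->; rewrite ltnn.
Qed.

Lemma L_left_le t (i j : 'I_r) (hij : val j = i.+1) :
  L (permcomp (tperm i j) t) <= (L t).+1.
Proof.
set P := if t^-1 i < t^-1 j then (t^-1 i, t^-1 j) else (t^-1 j, t^-1 i).
apply: (@leq_trans #|P |: invset t|); last by rewrite cardsU1; case: (_ \notin _).
apply: subset_leq_card; apply/subsetP => -[a b] H.
rewrite in_setU1; case: eqP => //= HP.
have ab : a < b by move: H; rewrite inE => /andP[].
rewrite -(inv_pres hij) //.
- apply/negP => /andP[/eqP ta /eqP tb]; apply: HP.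
  by rewrite /P -ta -tb !permK ab.
- apply/negP => /andP[/eqP ta /eqP tb]; apply: HP.
  by rewrite /P -ta -tb !permK ltnNge (ltnW ab).
Qed.

Lemma L_left_up t (i j : 'I_r) (hij : val j = i.+1) : t^-1 i < t^-1 j ->
  L (permcomp (tperm i j) t) = (L t).+1.
Proof.
move=> hlt; apply/eqP; rewrite eqn_leq L_left_le //=.
set P := (t^-1 i, t^-1 j).
have PnI : P \notin invset t by rewrite inE /= !permKV hlt /= hij -leqNgt.
apply: (@leq_trans #|P |: invset t|); first by rewrite cardsU1 PnI.
apply: subset_leq_card; apply/subsetP => -[a b]; rewrite in_setU1 => /orP[/eqP ->|H].
  by rewrite inE /= hlt /= !permcompE !permKV tpermL tpermR hij.
have ab : a < b by move: H; rewrite inE => /andP[].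
rewrite (inv_pres hij) //.
- apply/negP => /andP[/eqP ta /eqP tb]; move: H; rewrite inE /= ta tb hij; lia.
- apply/negP => /andP[/eqP ta /eqP tb]; move: hlt.
  by rewrite -ta -tb !permK ltnNge (ltnW ab).
Qed.

Lemma L_right_up s (i j : 'I_r) (hij : val j = i.+1) : s i < s j ->
  L (permcomp s (tperm i j)) = (L s).+1.
Proof.
move=> hlt; rewrite -L_inv.
have -> : (permcomp s (tperm i j))^-1 = permcomp (tperm i j) s^-1.
  by rewrite /permcomp invMg tpermV.
by rewrite L_left_up ?invgK // L_inv.
Qed.

Lemma sadjE i (h : i.+1 < r) : sadj r i = tperm (Ordinal (ltnW h)) (Ordinal h).
Proof. by rewrite /sadj (insubT (fun k => k < r) (ltnW h)) (insubT (fun k => k < r) h). Qed.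

Lemma L1 : L 1 = 0.
Proof.
apply/eqP; rewrite cards_eq0; apply/eqP/setP => -[a b]; rewrite !inE /= !perm1.
by case: ltngtP.
Qed.

Lemma wordprod_cat w1 w2 :
  wordprod r (w1 ++ w2) = permcomp (wordprod r w1) (wordprod r w2).
Proof.
elim: w1 => [|i w1 IH] /=; first by rewrite /permcomp mulg1.
by rewrite IH /permcomp mulgA.
Qed.

Lemma L_lower w : validword r w -> L (wordprod r w) <= size w.
Proof.
elim: w => [|i w IH] /=; first by rewrite L1.
case/andP => hi hw; rewrite sadjE.
apply: leq_trans (L_left_le _ _) _ => //=.
by rewrite ltnS IH.
Qed.

Lemma mono_L0 s : L s = 0 -> forall a b : 'I_r, a < b -> s a < s b.
Proof.
move=> /eqP; rewrite cards_eq0 => /eqP H a b ab.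
have : (a, b) \notin invset s by rewrite H inE.
rewrite inE /= ab /= -leqNgt leq_eqVlt => /orP[/eqP/val_inj/perm_inj E|//].
by move: ab; rewrite E ltnn.
Qed.

Lemma mono_ge s : (forall a b : 'I_r, a < b -> s a < s b) -> forall a : 'I_r, a <= s a.
Proof.
move=> M.
suff : forall k (a : 'I_r), val a = k -> k <= s a by move=> H a; apply: H.
elim=> [//|k IH] a ha.
have hk : k < r by apply: ltn_trans (ltn_ord a); rewrite ha.
have := M (Ordinal hk) a; rewrite ha ltnSn => /(_ isT).
by apply: leq_trans; rewrite ltnS IH.
Qed.

Lemma L0_id s : L s = 0 -> s = 1.
Proof.
move=> H; have H' : L s^-1 = 0 by rewrite L_inv.
apply/permP => a; rewrite perm1; apply/val_inj/eqP; rewrite eqn_leq.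
rewrite (mono_ge (mono_L0 H)) andbT.
by have := mono_ge (mono_L0 H') (s a); rewrite permK.
Qed.

Lemma descent s : 0 < L s ->
  exists i (h : i.+1 < r), s (Ordinal h) < s (Ordinal (ltnW h)).
Proof.
rewrite card_gt0 => /set0Pn [[a b]]; rewrite inE /= => /andP[ab].
suff : forall k (a b : 'I_r), (b : nat) = a + k.+1 -> s b < s a ->
  exists i (h : i.+1 < r), s (Ordinal h) < s (Ordinal (ltnW h)).
  by move=> H sba; apply: (H (b - a).-1 a b _ sba); lia.
elim=> [|k IH] {ab}a {}b hb sba.
  have h : a.+1 < r by have := ltn_ord b; lia.
  exists a, h.
  have -> : Ordinal h = b by apply/val_inj => /=; lia.
  by have -> : Ordinal (ltnW h) = a by apply/val_inj.
have hc : a + k.+1 < r by have := ltn_ord b; lia.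
case: (ltngtP (s b) (s (Ordinal hc))) => H.
- have h : (a + k.+1).+1 < r by have := ltn_ord b; lia.
  exists (a + k.+1), h.
  have -> : Ordinal h = b by apply/val_inj => /=; lia.
  by have -> : Ordinal (ltnW h) = Ordinal hc by apply/val_inj.
- by apply: (IH a (Ordinal hc)) => //; apply: ltn_trans sba.
- by move/val_inj/perm_inj: H => /(congr1 val) /=; rewrite hb; lia.
Qed.

Lemma words s : exists w, [/\ validword r w, size w = L s & wordprod r w = s].
Proof.
suff : forall m s, L s <= m -> exists w, [/\ validword r w, size w = L s & wordprod r w = s].
  by apply.
elim=> [|m IH] {}s hm.
  by move: hm; rewrite leqn0 => /eqP H; exists [::]; rewrite H (L0_id H).
case: (posnP (L s)) => [H|Hp]; first by exists [::]; rewrite H (L0_id H).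
have [i [h hd]] := descent Hp.
set tau := tperm (Ordinal (ltnW h)) (Ordinal h).
set t := permcomp s tau.
have ht : L (permcomp t tau) = (L t).+1.
  apply: L_right_up => //; rewrite /t !permcompE /tau tpermL tpermR //.
have tt : permcomp t tau = s by rewrite /t /permcomp mulgA tperm2 mul1g.
rewrite tt in ht.
have [w [vw sw ww]] : exists w, [/\ validword r w, size w = L t & wordprod r w = t].
  by apply: IH; rewrite -ltnS -ht.
exists (w ++ [:: i]); split.
- by move: vw; rewrite /validword all_cat => -> /=; rewrite h.
- by rewrite size_cat sw ht addn1.
- by rewrite wordprod_cat ww /= sadjE /permcomp mul1g -/tau -/(permcomp t tau) tt.
Qed.

Lemma coxlenE s : coxlen s = L s.
Proof.
have H : is_coxlen s (L s).
  split; first exact: words.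
  by move=> w vw <-; apply: L_lower.
have := epsilon_spec (inhabits 0) (is_coxlen s) (ex_intro _ _ H).
rewrite -/(coxlen s) => -[[w [vw sw ws]] lb].
have [w' [v' s' e']] := words s.
apply/eqP; rewrite eqn_leq; apply/andP; split.
  by rewrite -s'; apply: lb.
by rewrite -sw -{1}ws L_lower.
Qed.

End Cox.

Definition incr (x : seq nat) := forall k, k.+1 < size x -> nth 0 x k < nth 0 x k.+1.

Lemma incr_gap x : incr x -> forall i j, i <= j -> j < size x -> nth 0 x i + (j - i) <= nth 0 x j.
Proof.
move=> H i; elim=> [|j IH] ij hj.
  by move: ij; rewrite leqn0 => /eqP ->; rewrite subnn addn0.
case: (eqVneq i j.+1) => [->|ne]; first by rewrite subnn addn0.
have ij' : i <= j by move/eqP: ne; lia.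
have := IH ij' (ltnW hj); have := H j hj; lia.
Qed.

Lemma leIP x y : leI x y <-> size x = size y /\ forall k, k < size x -> nth 0 x k <= nth 0 y k.
Proof.
elim: x y => [|a x IH] [|b y] //=.
- by split => // -[].
- by split => // -[].
rewrite /leI /= -/(leI x y); split.
  move=> /andP[ab /IH [sz H]]; split; first by rewrite sz.
  by case=> [|k] hk //=; apply: H.
case=> [[sz] H]; apply/andP; split; first exact: (H 0 isT).
by apply/IH; split => // k hk; exact: (H k.+1 hk).
Qed.

Lemma leI_sumn x y : leI x y -> sumn x <= sumn y.
Proof.
elim: x y => [|a x IH] [|b y] //= /andP[ab /IH]; lia.
Qed.

Lemma leI_sumn_eq x y : leI x y -> sumn x = sumn y -> x = y.
Proof.
elim: x y => [|a x IH] [|b y] //= /andP[ab H] E.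
have := leI_sumn H => h.
have ab' : a = b by lia.
by rewrite ab' (IH y H) //; lia.
Qed.

Lemma sumn_iota_shift m k c : sumn (iota (m + k) c) = sumn (iota m c) + c * k.
Proof.
elim: c m => [|c IH] m //=.
by rewrite -addSn IH; lia.
Qed.

Section Chains.
Variables d n : nat.
Hypothesis hdn : 0 < d < n.

Definition good (x : seq nat) :=
  [/\ size x = d, incr x & forall k, k < d -> 0 < nth 0 x k <= n].

Lemma inIP x : inI d n x <-> good x.
Proof.
rewrite /inI; split.
  move=> /and3P[/eqP sx so /(all_nthP 0) al]; split => //.
  - case: x so {sx al} => [|a s] //= so k hk.
    by move/(pathP 0): so => /(_ k hk).
  - by move=> k hk; apply: al; rewrite sx.
case=> sx hi bd; apply/and3P; split; first by rewrite sx.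
- case: x {sx bd} hi => [|a s] //= hi.
  by apply/(pathP 0) => k hk; exact: hi.
- by apply/(all_nthP 0) => k hk; apply: bd; rewrite -sx.
Qed.

Lemma good_bounds x i : good x -> i < d -> i < nth 0 x i /\ nth 0 x i + (d.-1 - i) <= n.
Proof.
case=> sx hi bd hid; split.
  have hx : i < size x by rewrite sx.
  have := incr_gap hi (leq0n i) hx.
  have := bd 0 (leq_ltn_trans (leq0n _) hid); lia.
have hd : d.-1 < size x by rewrite sx; lia.
have h1 : i <= d.-1 by lia.
have h2 : d.-1 < d by lia.
have := incr_gap hi h1 hd; have := bd d.-1 h2.
lia.
Qed.

Lemma good_inc x i : good x -> i < d -> (i.+1 < d -> (nth 0 x i).+1 < nth 0 x i.+1) ->
  (nth 0 x i).+1 <= n -> good (inc x i).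
Proof.
case=> sx hi bd hid h1 h2; split.
- by rewrite size_inc // sx.
- move=> k; rewrite size_inc ?sx // => hk; rewrite !nth_inc.
  have a1 := hi k; rewrite sx in a1; have {a1} a1 := a1 hk.
  have a2 := bd k (ltnW hk); have a3 := bd i hid.
  have a4 : k = i -> (nth 0 x i).+1 < nth 0 x i.+1 by move=> e; apply: h1; rewrite -e.
  natcase.
- move=> k hk; rewrite nth_inc; have := bd k hk; have := bd i hid; natcase.
Qed.

Lemma nth_top k : k < d -> nth 0 (topI d n) k = (n - d).+1 + k.
Proof. by move=> hk; rewrite nth_iota. Qed.

Lemma good_top : good (topI d n).
Proof.
split; first by rewrite size_iota.
- by move=> k; rewrite size_iota => hk; rewrite !nth_iota; lia.
- by move=> k hk; rewrite nth_iota //; lia.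
Qed.

Lemma good_bot : good (botI d).
Proof.
split; first by rewrite size_iota.
- by move=> k; rewrite size_iota => hk; rewrite !nth_iota; lia.
- by move=> k hk; rewrite nth_iota //; lia.
Qed.

Lemma sumn_top_bot : sumn (topI d n) = sumn (botI d) + d * (n - d).
Proof. by rewrite /topI /botI -sumn_iota_shift add1n. Qed.

Lemma good_le_top x : good x -> leI x (topI d n).
Proof.
move=> gx; apply/leIP; case: (gx) => sx _ _; split; first by rewrite size_iota.
move=> k; rewrite sx => hk; rewrite nth_top //.
have [_] := good_bounds gx hk; lia.
Qed.

End Chains.

Section Cov.
Variables d n : nat.
Hypothesis hdn : 0 < d < n.

Lemma succ_val_inj : injective (fun i : 'I_n => (val i).+1).
Proof. by move=> i j [] /val_inj. Qed.

Lemma memI z : (z \in enumI d n) = inI d n z.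
Proof.
apply/idP/idP.
  case/mapP => A; rewrite mem_enum inE => /eqP cA ->.
  apply/and3P; split.
  - by rewrite size_map -cardE cA.
  - rewrite sorted_map /enum_mem -enumT /=.
    apply: sorted_filter; first by move=> a b c /= ab bc; apply: ltn_trans ab bc.
    have := iota_ltn_sorted 0 n; rewrite -val_enum_ord sorted_map.
    by apply: sub_sorted => a b /=; rewrite ltnS.
  - by apply/allP => k /mapP [i _ ->]; rewrite /= ltn_ord.
move=> zI; have := zI; move/and3P: zI => [/eqP sz so /allP al] _.
set A := [set i : 'I_n | (val i).+1 \in z].
have E : [seq (val i).+1 | i <- enum A] = z.
  apply: (irr_sorted_eq ltn_trans ltnn).
  - rewrite sorted_map /enum_mem -enumT /=.
    apply: sorted_filter; first by move=> a b c /= ab bc; apply: ltn_trans ab bc.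
    have := iota_ltn_sorted 0 n; rewrite -val_enum_ord sorted_map.
    by apply: sub_sorted => a b /=; rewrite ltnS.
  - exact: so.
  move=> k; apply/mapP/idP.
    by case=> i; rewrite mem_enum inE => H ->.
  move=> kz; have := al k kz => /andP[k0 kn].
  have hk : k.-1 < n by lia.
  exists (Ordinal hk); last by rewrite /=; lia.
  by rewrite mem_enum inE /= prednK.
apply/mapP; exists A => //.
by rewrite mem_enum inE cardE -(size_map (fun i : 'I_n => (val i).+1)) E sz.
Qed.

Lemma enumI_uniq : uniq (enumI d n).
Proof.
rewrite map_inj_in_uniq ?enum_uniq // => A B _ _ E.
apply/setP => i; rewrite -(mem_enum A) -(mem_enum B).
by rewrite -(mem_map succ_val_inj) E (mem_map succ_val_inj).
Qed.

Lemma coversP x y : coversI d n x y <->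
  [/\ good d n x, good d n y & exists2 i, i < d & y = inc x i].
Proof.
split.
  move=> /and4P[/inIP gx /inIP gy /andP[le ne] nh]; split => //.
  have [sx _ _] := gx; have [sy _ _] := gy.
  have [_ le'] := (leIP x y).1 le; rewrite sx in le'.
  pose P k := (k < d) && (nth 0 x k < nth 0 y k).
  have ex : exists k, P k.
    case: (boolP (has P (iota 0 d))) => [/hasP[k _ Pk] | /hasPn H]; first by exists k.
    case/eqP: ne; apply: (@eq_from_nth _ 0); first by rewrite sx sy.
    move=> k; rewrite sx => hk; have := H k; rewrite mem_iota /= hk => /(_ isT).
    rewrite /P hk /= -leqNgt; have := le' k hk; lia.
  have bd : forall k, P k -> k <= d by move=> k /andP[/ltnW].
  have [j /andP[jd xy] mx] := ex_maxnP ex bd.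
  have eqa : forall k, j < k < d -> nth 0 x k = nth 0 y k.
    move=> k /andP[jk kd]; have h1 := le' k kd; have h2 := mx k; rewrite /P kd /= in h2.
    apply/eqP; rewrite eqn_leq h1 /= leqNgt; apply/negP => h3; have := h2 h3; lia.
  have gz : good d n (inc x j).
    apply: good_inc => //.
      move=> hj; have [_ iy _] := gy; have := iy j; rewrite sy => /(_ hj).
      have := eqa j.+1; rewrite ltnSn hj => /(_ isT); lia.
    by have [_ _ /(_ j jd)] := gy; lia.
  case: (eqVneq y (inc x j)) => [E|NE]; first by exists j.
  case/negP: nh; apply/hasP; exists (inc x j); first by rewrite memI; apply/inIP.
  apply/andP; split; apply/andP; split.
  - apply/leIP; rewrite size_inc ?sx //; split => // k hk; rewrite nth_inc.
    by case: eqP => [->|_] //; lia.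
  - apply/eqP => /(congr1 (fun s => nth 0 s j)); rewrite nth_inc eqxx; lia.
  - apply/leIP; rewrite size_inc ?sx ?sy //; split => // k hk; rewrite nth_inc.
    by case: eqP => [->|_]; [lia | apply: le'].
  - by rewrite eq_sym.
case=> gx gy [i hi Ey]; subst y.
have [sx _ _] := gx.
have hi' : i < size x by rewrite sx.
apply/and4P; split; try by apply/inIP.
  apply/andP; split.
    apply/leIP; rewrite size_inc //; split => // k hk; rewrite nth_inc.
    by case: eqP => [->|_] //; exact: leqnSn.
  apply/eqP => /(congr1 (fun s => nth 0 s i)); rewrite nth_inc eqxx; lia.
apply/hasPn => z zI; apply/negP => /andP[/andP[lxz nxz] /andP[lzy nzy]].
have [e1 le1] := (leIP x z).1 lxz; have [e2 le2] := (leIP z _).1 lzy.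
rewrite size_inc // in e2.
case: (eqVneq (nth 0 z i) (nth 0 x i)) => [E|NE].
  case/eqP: nxz; apply: (@eq_from_nth _ 0) => // k hk.
  have := le1 k hk; have := le2 k; rewrite -e1 => /(_ hk); rewrite nth_inc.
  by case: eqP => [->|_]; rewrite ?E; lia.
case/eqP: nzy; apply: (@eq_from_nth _ 0); first by rewrite size_inc.
move=> k; rewrite -e1 => hk.
have := le1 k hk; have := le2 k; rewrite -e1 => /(_ hk); rewrite nth_inc.
by move/eqP: NE; case: eqP => [->|_]; lia.
Qed.

End Cov.

Definition diffidx (x y : seq nat) := find (fun p : nat * nat => p.1 != p.2) (zip x y).

Lemma diffidx_inc x i : i < size x -> diffidx x (inc x i) = i.
Proof.
elim: x i => [|a x IH] [|i] //= h.
  by rewrite /diffidx /= neq_ltn ltnSn.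
by rewrite /diffidx /= eqxx /= -/(inc x i) -/(diffidx x (inc x i)) IH.
Qed.

Definition sidx C k := diffidx (at_ C k) (at_ C k.+1).
Definition stepP C k := (nth 0 (at_ C k) (sidx C k), (sidx C k).+1).

Lemma sumn_const (s : seq nat) c : sumn [seq c | _ <- s] = size s * c.
Proof. by elim: s => //= _ s ->; rewrite mulSn. Qed.

Section MC.
Variables d n : nat.
Hypothesis hdn : 0 < d < n.
Local Notation r := (d * (n - d)).

Definition chainok C := forall k, k.+1 < size C -> coversI d n (at_ C k) (at_ C k.+1).

Lemma maxchainP C : maxchain d n C <->
  [/\ 0 < size C, at_ C 0 = botI d, at_ C (size C).-1 = topI d n & chainok C].
Proof.
case: C => [|x C] /=; first by split => // -[].
rewrite /at_ /=; split.
  case/and3P => /eqP h0 /eqP lt /(pathP [::]) pc; split => //.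
  by rewrite (set_nth_default x) //; have := nth_last x (x :: C); rewrite /= => ->.
case=> _ h0 hl hc; apply/and3P; split; first by apply/eqP.
  apply/eqP; rewrite -hl (set_nth_default x) //.
  by have := nth_last x (x :: C); rewrite /= => ->.
by apply/(pathP [::]) => k hk; exact: hc.
Qed.

Lemma mc_good C k : maxchain d n C -> k < size C -> good d n (at_ C k).
Proof.
case/maxchainP => _ h0 _ hc; case: k => [|k] hk; first by rewrite h0; apply: good_bot.
by have /(coversP hdn) [] := hc k hk.
Qed.

Lemma mc_cov C k : maxchain d n C -> k.+1 < size C ->
  exists2 i, i < d & at_ C k.+1 = inc (at_ C k) i.
Proof. by case/maxchainP => _ _ _ hc hk; have /(coversP hdn) [] := hc k hk. Qed.

Lemma mc_sum C k : maxchain d n C -> k < size C -> sumn (at_ C k) = sumn (botI d) + k.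
Proof.
move=> mc; elim: k => [|k IH] hk.
  by case/maxchainP: mc => _ -> _ _; rewrite addn0.
have [i hi ->] := mc_cov mc hk.
have [sx _ _] := mc_good mc (ltnW hk).
by rewrite sumn_inc ?sx // IH ?(ltnW hk) // addnS.
Qed.

Lemma mc_size C : maxchain d n C -> size C = r.+1.
Proof.
move=> mc; case/maxchainP: (mc) => s0 _ hl _.
have hs : (size C).-1 < size C by rewrite prednK.
have := mc_sum mc hs; rewrite hl sumn_top_bot => /addnI E.
by rewrite E prednK.
Qed.

Lemma mc_step C k : maxchain d n C -> k < r ->
  sidx C k < d /\ at_ C k.+1 = inc (at_ C k) (sidx C k).
Proof.
move=> mc hk; have hk' : k.+1 < size C by rewrite (mc_size mc).
have [i hi E] := mc_cov mc hk'.
have [sx _ _] := mc_good mc (ltnW hk').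
by rewrite /sidx E diffidx_inc ?sx.
Qed.

Lemma mc_mono C k k' i : maxchain d n C -> k <= k' -> k' < size C ->
  nth 0 (at_ C k) i <= nth 0 (at_ C k') i.
Proof.
move=> mc kk'; elim: k' kk' => [|k' IH] kk' hk'.
  by move: kk'; rewrite leqn0 => /eqP ->.
case: (eqVneq k k'.+1) => [->//|ne].
have [j _ ->] := mc_cov mc hk'.
have kk : k <= k' by move/eqP: ne; lia.
have h := IH kk (ltnW hk').
by rewrite nth_inc; case: eqP => [E|_]; [rewrite -E|]; lia.
Qed.

Lemma mem_adm s h : ((s, h) \in admissible d n) = (0 < h <= d) && (h <= s < n - d + h).
Proof.
apply/allpairsPdep/andP.
  case=> h' [s' [hm sm [-> ->]]]; move: hm sm; rewrite !mem_iota; lia.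
case=> h1 h2; exists h, s; split => //; rewrite mem_iota; lia.
Qed.

Lemma size_adm : size (admissible d n) = r.
Proof.
rewrite size_allpairs_dep.
under eq_map => h do rewrite size_iota.
by rewrite sumn_const size_iota.
Qed.

Lemma rootop_inc x i : good d n x -> good d n (inc x i) -> i < d ->
  rootop d (nth 0 x i, i.+1) x = Some (inc x i).
Proof.
move=> gx [s2 h2 _] hi; rewrite /rootop eqxx /=.
case: (eqVneq i.+1 d) => //= ne.
have hh : i.+1 < d by move/eqP: ne; lia.
have := h2 i; rewrite s2 => /(_ hh); rewrite !nth_inc eqxx (gtn_eqF (ltnSn i)) => ->.
by [].
Qed.

Lemma rootop_uniq p x i : p \in admissible d n -> i < size x ->
  rootop d p x = Some (inc x i) -> p = (nth 0 x i, i.+1).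
Proof.
case: p => s h; rewrite mem_adm => /andP[/andP[h0 hd] _] hi; rewrite /rootop.
case: ifP => // /andP[/eqP xs _] [E].
have := congr1 (fun z => nth 0 z i) E; rewrite nth_set_nth /= nth_inc eqxx.
case: eqP => [ih|nih]; last lia.
by move=> _; rewrite ih xs prednK.
Qed.

Lemma step_adm x i : good d n x -> good d n (inc x i) -> i < d ->
  (nth 0 x i, i.+1) \in admissible d n.
Proof.
move=> gx gy hi; rewrite mem_adm.
have [b1 _] := good_bounds hdn gx hi; have [_ b2] := good_bounds hdn gy hi.
move: b2; rewrite nth_inc eqxx; lia.
Qed.

Lemma steppairE x i : good d n x -> good d n (inc x i) -> i < d ->
  steppair d n x (inc x i) = (nth 0 x i, i.+1).
Proof.
move=> gx gy hi; rewrite /steppair.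
set F := filter _ _.
have inF : (nth 0 x i, i.+1) \in F by rewrite mem_filter rootop_inc // eqxx step_adm.
have allF : forall p, p \in F -> p = (nth 0 x i, i.+1).
  move=> p; rewrite mem_filter => /andP[/eqP E pa]; apply: rootop_uniq pa _ E.
  by have [-> _ _] := gx.
by case: F inF allF => [|q F'] //= _ H; apply: H; rewrite mem_head.
Qed.

Lemma mc_good2 C k : maxchain d n C -> k < r -> good d n (at_ C k) /\ good d n (at_ C k.+1).
Proof.
move=> mc hk; have hk' : k.+1 < size C by rewrite (mc_size mc).
by split; apply: mc_good => //; apply: ltnW.
Qed.

Lemma mc_adm C k : maxchain d n C -> k < r -> stepP C k \in admissible d n.
Proof.
move=> mc hk; have [g1 g2] := mc_good2 mc hk; have [hi E] := mc_step mc hk.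
by rewrite E in g2; apply: step_adm.
Qed.

Lemma mc_rootop C k : maxchain d n C -> k < r -> rootop d (stepP C k) (at_ C k) = Some (at_ C k.+1).
Proof.
move=> mc hk; have [g1 g2] := mc_good2 mc hk; have [hi E] := mc_step mc hk.
by rewrite E in g2 *; apply: rootop_inc.
Qed.

Lemma mc_steppair C k : maxchain d n C -> k < r -> steppair d n (at_ C k) (at_ C k.+1) = stepP C k.
Proof.
move=> mc hk; have [g1 g2] := mc_good2 mc hk; have [hi E] := mc_step mc hk.
by rewrite E in g2 *; apply: steppairE.
Qed.

Lemma mc_rootop_uniq C k p : maxchain d n C -> k < r -> p \in admissible d n ->
  rootop d p (at_ C k) = Some (at_ C k.+1) -> p = stepP C k.
Proof.
move=> mc hk pa; have [g1 g2] := mc_good2 mc hk; have [hi E] := mc_step mc hk.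
rewrite E => H; apply: rootop_uniq pa _ H.
by have [-> _ _] := g1.
Qed.

Lemma stepP_inj C k k' : maxchain d n C -> k < r -> k' < r -> stepP C k = stepP C k' -> k = k'.
Proof.
move=> mc.
have aux : forall k k', k < k' -> k' < r -> stepP C k = stepP C k' -> False.
  move=> a b ab hb [E1 E2].
  have ha : a < r by apply: ltn_trans ab hb.
  have [_ Ea] := mc_step mc ha.
  have := mc_mono (sidx C a) mc ab (_ : b < size C); rewrite (mc_size mc) => /(_ (ltnW hb)).
  rewrite Ea nth_inc eqxx E1 E2; lia.
move=> hk hk' E; case: (ltngtP k k') => // H; exfalso.
  exact: aux H hk' E.
exact: aux H hk (esym E).
Qed.

Lemma stepP_onto C p : maxchain d n C -> p \in admissible d n -> exists2 k, k < r & stepP C k = p.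
Proof.
move=> mc pa.
set L := [seq stepP C k | k <- iota 0 r].
have uL : uniq L.
  rewrite map_inj_in_uniq ?iota_uniq // => a b; rewrite !mem_iota !add0n => ha hb.
  exact: stepP_inj.
case: (boolP (p \in L)) => [/mapP[k] | pL].
  by rewrite mem_iota add0n => hk ->; exists k.
exfalso.
have U : uniq (p :: L) by rewrite /= pL.
have sub : {subset p :: L <= admissible d n}.
  move=> q; rewrite inE => /orP[/eqP -> //|/mapP[k]].
  by rewrite mem_iota add0n => hk ->; apply: mc_adm.
have := uniq_leq_size U sub.
by rewrite /= /L size_map size_iota size_adm ltnn.
Qed.

End MC.

Lemma at_set C t z k : at_ (set_nth [::] C t z) k = if k == t then z else at_ C k.
Proof. by rewrite /at_ nth_set_nth. Qed.

Lemma between4 x z a b : size z = size x -> a < size x -> b < size x ->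
  (forall k, k < size x -> nth 0 x k <= nth 0 z k <= nth 0 (inc (inc x a) b) k) ->
  z \in [:: x; inc x a; inc x b; inc (inc x a) b].
Proof.
move=> sz ha hb H.
have eqw : forall w, size w = size x -> (forall k, k < size x -> nth 0 z k = nth 0 w k) -> z = w.
  by move=> w sw Hw; apply: (@eq_from_nth _ 0) => [|k]; [rewrite sz sw | rewrite sz; apply: Hw].
have s1 : size (inc x a) = size x by rewrite size_inc.
have s2 : size (inc x b) = size x by rewrite size_inc.
have s3 : size (inc (inc x a) b) = size x by rewrite !size_inc ?s1.
have Ha := H a ha; have Hb := H b hb; rewrite !nth_inc in Ha Hb.
case: (eqVneq (nth 0 z a) (nth 0 x a)) => [za|za]; case: (eqVneq (nth 0 z b) (nth 0 x b)) => [zb|zb].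
- have -> : z = x by apply: eqw => // k hk; move: (H k hk); rewrite !nth_inc; move: za zb Ha Hb; natcase.
  by rewrite inE eqxx.
- have -> : z = inc x b by apply: eqw => // k hk; move: (H k hk); rewrite !nth_inc; move: za zb Ha Hb; natcase.
  by rewrite !inE eqxx !orbT.
- have -> : z = inc x a by apply: eqw => // k hk; move: (H k hk); rewrite !nth_inc; move: za zb Ha Hb; natcase.
  by rewrite !inE eqxx !orbT.
case: (eqVneq a b) => [ab|ab].
  subst b; case: (eqVneq (nth 0 z a) (nth 0 x a).+1) => [za1|za1].
    have -> : z = inc x a by apply: eqw => // k hk; move: (H k hk); rewrite !nth_inc; move: za zb za1 Ha Hb; natcase.
    by rewrite !inE eqxx !orbT.
  have -> : z = inc (inc x a) a by apply: eqw => // k hk; move: (H k hk); rewrite !nth_inc; move: za zb za1 Ha Hb; natcase.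
  by rewrite !inE eqxx !orbT.
have -> : z = inc (inc x a) b by apply: eqw => // k hk; move: (H k hk); rewrite !nth_inc; move: za zb ab Ha Hb; natcase.
by rewrite !inE eqxx !orbT.
Qed.

Section Main.
Variables d n : nat.
Hypothesis hdn : 0 < d < n.
Local Notation r := (d * (n - d)).

Lemma mc_at C k : maxchain d n C -> k < r -> sidx C k < d /\ at_ C k.+1 = inc (at_ C k) (sidx C k).
Proof. exact: mc_step. Qed.

Lemma swap_mc C t : maxchain d n C -> 0 < t < r -> sidx C t.-1 != sidx C t ->
  good d n (inc (at_ C t.-1) (sidx C t)) ->
  maxchain d n (set_nth [::] C t (inc (at_ C t.-1) (sidx C t))).
Proof.
move=> mc /andP[t0 tr] ab gz.
set x := at_ C t.-1; set a := sidx C t.-1; set b := sidx C t.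
have sC := mc_size hdn mc.
have ht1 : t.-1 < r by lia.
have [ha E1] := mc_step hdn mc ht1; rewrite prednK // in E1.
have [hb E2] := mc_step hdn mc tr.
case/maxchainP: (mc) => s0 h0 hl hc.
have sz : size (set_nth [::] C t (inc x b)) = size C.
  by rewrite size_set_nth; apply/maxn_idPr; rewrite sC; lia.
apply/maxchainP; split; rewrite ?sz //.
- by rewrite at_set; case: eqP => [e|_]; [move: t0; rewrite -e | exact: h0].
- rewrite at_set sC /=; case: eqP => [e|_]; [by move: tr; rewrite e ltnn|].
  by rewrite -hl sC.
move=> k hk; rewrite sz in hk; rewrite !at_set.
case: (eqVneq k t) => [ekt|kt].
  subst k; rewrite ?(gtn_eqF (ltnSn t)); apply/(coversP hdn); split => //.
    by apply: mc_good.
  by exists a => //; rewrite E2 E1 inc_comm.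
idtac.
case: (eqVneq k.+1 t) => [kt1|kt1].
  apply/(coversP hdn); split => //.
    by apply: mc_good => //; lia.
  by exists b => //; rewrite /x -kt1.
by apply: hc.
Qed.

Lemma four_prop C t : maxchain d n C -> 0 < t < r -> four d n C t ->
  [/\ sidx C t.-1 != sidx C t, iprime d n C t = inc (at_ C t.-1) (sidx C t)
    & good d n (inc (at_ C t.-1) (sidx C t))].
Proof.
move=> mc /andP[t0 tr] f4.
set x := at_ C t.-1; set a := sidx C t.-1; set b := sidx C t.
have ht1 : t.-1 < r by lia.
have [ha E1] := mc_step hdn mc ht1; rewrite prednK // in E1.
have [hb E2] := mc_step hdn mc tr.
have gx : good d n x by apply: mc_good => //; rewrite (mc_size hdn mc); lia.
have [sx _ _] := gx.
have Hint : forall z, z \in intervalI d n x (at_ C t.+1) ->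
    z \in [:: x; inc x a; inc x b; inc (inc x a) b].
  move=> z; rewrite mem_filter => /andP[/andP[lxz lzy] zI].
  have [e1 le1] := (leIP x z).1 lxz; have [e2 le2] := (leIP z _).1 lzy.
  apply: between4 => //; rewrite ?sx //.
  move=> k hk; have hk1 : k < size x by rewrite sx.
  have hk2 : k < size z by rewrite -e1.
  rewrite le1 //=; rewrite E2 E1 in le2; exact: (le2 k hk2).
have ui : uniq (intervalI d n x (at_ C t.+1)) by apply: filter_uniq; apply: enumI_uniq.
move: f4; rewrite /four /iprime -/x.
set F := [seq z <- _ | _].
case EF : F => [|z0 F'] f4.
  have sub : {subset intervalI d n x (at_ C t.+1) <= [:: x; at_ C t; at_ C t.+1]}.
    move=> z zi; apply/negPn/negP => zn.
    have : z \in F by rewrite mem_filter zn zi.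
    by rewrite EF.
  by have := uniq_leq_size ui sub; rewrite (eqP f4).
have : z0 \in F by rewrite EF mem_head.
rewrite mem_filter => /andP[zn zi].
have := Hint z0 zi; rewrite -E1 -E2 !inE.
move: (zn); rewrite !inE => /norP[/negbTE -> /norP[/negbTE -> /negbTE ->]] /= /orP[/eqP ez|//].
have gz : good d n z0.
  by move: zi; rewrite mem_filter => /andP[_]; rewrite (memI hdn) => /inIP.
split; rewrite -?ez //.
apply/eqP => eab; move: zn; rewrite ez E1 -/a eab -/b !inE eqxx.
by rewrite !orbT.
Qed.

End Main.

Section Cr.
Variables d n : nat.
Hypothesis hdn : 0 < d < n.
Local Notation r := (d * (n - d)).

Lemma path_up m x : good d n x -> sumn (topI d n) - sumn x = m ->
  exists C', path (coversI d n) x C' /\ last x C' = topI d n.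
Proof.
elim: m x => [|m IH] x gx hm.
  have le := good_le_top hdn gx.
  exists [::]; split => //=; apply: leI_sumn_eq => //.
  have := leI_sumn le; lia.
have le := good_le_top hdn gx.
have [sx _ _] := gx.
have [_ le'] := (leIP x _).1 le; rewrite sx in le'.
pose P k := (k < d) && (nth 0 x k < nth 0 (topI d n) k).
have ex : exists k, P k.
  case: (boolP (has P (iota 0 d))) => [/hasP[k _ Pk] | /hasPn H]; first by exists k.
  have xt : x = topI d n.
    apply: (@eq_from_nth _ 0); first by rewrite sx size_iota.
    move=> k; rewrite sx => hk; have := H k; rewrite mem_iota /= hk => /(_ isT).
    rewrite /P hk /= -leqNgt; have := le' k hk; lia.
  by move: hm; rewrite xt subnn.
have bd : forall k, P k -> k <= d by move=> k /andP[/ltnW].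
have [j /andP[jd xy] mx] := ex_maxnP ex bd.
have eqa : forall k, j < k < d -> nth 0 x k = nth 0 (topI d n) k.
  move=> k /andP[jk kd]; have h1 := le' k kd; have h2 := mx k; rewrite /P kd /= in h2.
  apply/eqP; rewrite eqn_leq h1 /= leqNgt; apply/negP => h3; have := h2 h3; lia.
have gy : good d n (inc x j).
  apply: good_inc => //.
    move=> hj; have := eqa j.+1; rewrite ltnSn hj => /(_ isT) ->.
    move: xy; rewrite !nth_top //; lia.
  move: xy; rewrite nth_top //; lia.
have cv : coversI d n x (inc x j) by apply/(coversP hdn); split => //; exists j.
have hm' : sumn (topI d n) - sumn (inc x j) = m by rewrite sumn_inc ?sx //; lia.
have [C'' [p l]] := IH (inc x j) gy hm'.
by exists (inc x j :: C''); split => //=; rewrite cv.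
Qed.

Lemma ex_mc : exists C, maxchain d n C.
Proof.
have [C' [p l]] := path_up (good_bot hdn) (erefl _).
by exists (botI d :: C'); rewrite /maxchain eqxx l eqxx p.
Qed.

Lemma mc_mem_good C x : maxchain d n C -> x \in C -> good d n x.
Proof.
move=> mc /(nthP [::]) [k hk <-]; exact: mc_good.
Qed.

Lemma chainstr_size C : maxchain d n C -> size (chainstr C) = r.+1 * d.
Proof.
move=> mc; rewrite -(mc_size hdn mc) size_flatten /shape map_rev sumn_rev.
have -> : [seq size i | i <- C] = [seq d | _ <- C].
  by apply/eq_in_map => x xC; have [] := mc_mem_good mc xC.
by elim: (C) => //= _ s ->; rewrite mulSn.
Qed.

Lemma chainstr_bd C : maxchain d n C -> all (fun a => a < n.+1) (chainstr C).
Proof.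
move=> mc; apply/allP => a /flattenP [s]; rewrite mem_rev => sC /(nthP 0) [j hj <-].
have [ss _ bd] := mc_mem_good mc sC.
have hj2 : j < d by rewrite -ss.
by have /andP[] := bd j hj2; rewrite ltnS.
Qed.

Lemma ex_min : exists C, is_Cright d n C.
Proof.
have [C0 m0] := ex_mc.
suff H : forall m C, maxchain d n C -> code n.+1 (chainstr C) <= m -> exists C, is_Cright d n C.
  exact: (H _ C0 m0 (leqnn _)).
elim=> [|m IH] C mc hm;
  case: (classic (exists C', maxchain d n C' /\ lexlt (chainstr C') (chainstr C))) => [[C' [mc' lt]]|nex].
- have := lexlt_code (_ : size (chainstr C') = size (chainstr C)) (chainstr_bd mc') (chainstr_bd mc) lt.
  by rewrite !chainstr_size // => /(_ erefl); lia.
- exists C; split => // C' mc'; rewrite /lexle.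
  have := lexlt_total (_ : size (chainstr C) = size (chainstr C')); rewrite !chainstr_size // => /(_ erefl).
  case/or3P => [->//|->|H]; first by rewrite orbT.
  by exfalso; apply: nex; exists C'.
- apply: (IH C' mc').
  have := lexlt_code (_ : size (chainstr C') = size (chainstr C)) (chainstr_bd mc') (chainstr_bd mc) lt.
  by rewrite !chainstr_size // => /(_ erefl); lia.
- exists C; split => // C' mc'; rewrite /lexle.
  have := lexlt_total (_ : size (chainstr C) = size (chainstr C')); rewrite !chainstr_size // => /(_ erefl).
  case/or3P => [->//|->|H]; first by rewrite orbT.
  by exfalso; apply: nex; exists C'.
Qed.

Lemma Cright_spec : is_Cright d n (Cright d n).
Proof. exact: (epsilon_spec (inhabits [::]) (is_Cright d n) ex_min). Qed.

Lemma Cright_mc : maxchain d n (Cright d n).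
Proof. by case: Cright_spec. Qed.

Lemma Cright_mono1 j : j.+1 < r -> sidx (Cright d n) j.+1 <= sidx (Cright d n) j.
Proof.
move=> hj; set Cr := Cright d n.
have [mc minC] := Cright_spec; rewrite -/Cr in mc minC.
rewrite leqNgt; apply/negP => ab.
set x := at_ Cr j; set a := sidx Cr j; set b := sidx Cr j.+1.
have [ha E1] := mc_step hdn mc (ltnW hj).
have [hb E2] := mc_step hdn mc hj.
have gx : good d n x by apply: mc_good => //; rewrite (mc_size hdn mc); lia.
have gy : good d n (at_ Cr j.+2) by apply: mc_good => //; rewrite (mc_size hdn mc); lia.
have [sx _ _] := gx.
rewrite E2 E1 in gy.
have gz : good d n (inc x b).
  apply: good_inc => //.
    move=> hb1; have [sy iy _] := gy; have := iy b.
    rewrite !size_inc ?sx // => /(_ hb1); rewrite !nth_inc eqxx.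
    rewrite (gtn_eqF (ltnSn b)) (gtn_eqF ab) (gtn_eqF (ltn_trans ab (ltnSn b))).
    by [].
  have [_ _ /(_ b hb)] := gy; rewrite !nth_inc eqxx (gtn_eqF ab) /x /b; lia.
have ne : sidx Cr j.+1.-1 != sidx Cr j.+1 by rewrite /=; rewrite -/a -/b neq_ltn ab.
have mc' := swap_mc hdn mc (_ : 0 < j.+1 < r) ne gz.
have lt : lexlt (chainstr (set_nth [::] Cr j.+1 (inc x b))) (chainstr Cr).
  apply: lexlt_setnth; first by rewrite (mc_size hdn mc); lia.
    by rewrite E1 !size_inc ?sx.
  by rewrite E1; apply: lexlt_inc; rewrite ?sx.
have := minC _ (mc' hj); rewrite /lexle => /orP[H|/eqP H].
  by move: (lexlt_asym H); rewrite lt.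
by move: lt; rewrite -H (negbTE (lexlt_irr _)).
Qed.

Lemma Cright_mono j j' : j <= j' -> j' < r -> sidx (Cright d n) j' <= sidx (Cright d n) j.
Proof.
elim: j' => [|j' IH] jj hj; first by move: jj; rewrite leqn0 => /eqP ->.
case: (eqVneq j j'.+1) => [->//|ne].
have jj' : j <= j' by move/eqP: ne; lia.
by apply: leq_trans (Cright_mono1 hj) (IH jj' (ltnW hj)).
Qed.

End Cr.

Section Sig.
Variables d n : nat.
Hypothesis hdn : 0 < d < n.
Local Notation r := (d * (n - d)).

Lemma tildefE j : j < r -> tildef d n j = stepP (Cright d n) j.
Proof. by move=> hj; rewrite /tildef mc_steppair // Cright_mc. Qed.

Lemma sigma_ex C : maxchain d n C -> exists s : 'S_r, sigma_spec d n C s.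
Proof.
move=> mc; set Cr := Cright d n; have mcr := Cright_mc hdn.
set L0 := [seq stepP Cr j | j <- iota 0 r].
have inL : forall k, k < r -> stepP C k \in L0.
  move=> k hk; have [j hj E] := stepP_onto hdn mcr (mc_adm hdn mc hk).
  by rewrite -E; apply: map_f; rewrite mem_iota.
have hidx : forall k : 'I_r, index (stepP C k) L0 < r.
  by move=> k; rewrite -{2}(size_iota 0 r) -(size_map (stepP Cr)) index_mem inL.
pose f (k : 'I_r) : 'I_r := Ordinal (hidx k).
have nthL : forall j, j < r -> nth (0, 0) L0 j = stepP Cr j.
  by move=> j hj; rewrite (nth_map 0) ?size_iota // nth_iota.
have fE : forall k, stepP Cr (f k) = stepP C k.
  by move=> k; rewrite -nthL //= nth_index // inL.
have finj : injective f.
  move=> k k' E; apply: ord_inj; apply: (stepP_inj hdn mc) => //.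
  by rewrite -!fE E.
exists (perm finj); apply/forallP => k.
by rewrite permE tildefE // fE (mc_rootop hdn mc)...
Qed.

Lemma sigma_char C : maxchain d n C ->
  forall k : 'I_r, stepP (Cright d n) (sigmaC d n C k) = stepP C k.
Proof.
move=> mc k; rewrite /sigmaC; case: pickP => [s Hs | Hn]; last first.
  by have [s Hs] := sigma_ex mc; move: (Hn s); rewrite Hs.
move/forallP: Hs => /(_ k) /eqP; rewrite tildefE // => H.
by rewrite -(mc_rootop_uniq hdn mc (ltn_ord k) (mc_adm hdn (Cright_mc hdn) (ltn_ord (s k))) H).
Qed.

Lemma stepP_swap C t k a b : maxchain d n C -> 0 < t < r -> sidx C t.-1 = a ->
  sidx C t = b -> a != b ->
  stepP (set_nth [::] C t (inc (at_ C t.-1) b)) k =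
  if k == t.-1 then stepP C t else if k == t then stepP C t.-1 else stepP C k.
Proof.
move=> mc /andP[t0 tr] Ea Eb ab.
have ht1 : t.-1 < r by lia.
have [ha E1] := mc_step hdn mc ht1; rewrite prednK // Ea in E1; rewrite Ea in ha.
have [hb E2] := mc_step hdn mc tr; rewrite Eb in E2 hb.
have gx : good d n (at_ C t.-1) by apply: (mc_good hdn mc); rewrite (mc_size hdn mc); lia.
have [sx _ _] := gx.
rewrite /stepP /sidx !at_set.
case: (eqVneq k t.-1) => [->|k1].
  have tt : t.-1 < t by lia.
  rewrite (ltn_eqF tt) prednK // eqxx E2 !diffidx_inc ?size_inc ?E1 ?size_inc ?sx //.
  by rewrite nth_inc eq_sym (negbTE ab).
case: (eqVneq k t) => [->|k2].
  rewrite (gtn_eqF (ltnSn t)) E2 E1 inc_comm // !diffidx_inc ?size_inc ?sx //.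
  rewrite prednK // E1 diffidx_inc ?sx // nth_inc.
  by rewrite (negbTE ab).
have -> : (k.+1 == t) = false by apply/eqP => e; move/eqP: k1; rewrite -e.
by [].
Qed.

Lemma sigma_swap C t : maxchain d n C -> 0 < t < r -> sidx C t.-1 != sidx C t ->
  good d n (inc (at_ C t.-1) (sidx C t)) ->
  sigmaC d n (set_nth [::] C t (inc (at_ C t.-1) (sidx C t))) =
  permcomp (sigmaC d n C) (sadj r t.-1).
Proof.
move=> mc tr ab gz.
have mc' := swap_mc hdn mc tr ab gz.
have ht : t.-1.+1 < r by case/andP: tr => t0 tr; rewrite prednK.
rewrite (sadjE ht); apply/permP => k; rewrite permcompE.
apply: ord_inj; apply: (stepP_inj hdn (Cright_mc hdn)) => //.
rewrite !sigma_char // (stepP_swap _ mc tr erefl erefl ab) //.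
have tv : nat_of_ord (tperm (Ordinal (ltnW ht)) (Ordinal ht) k) =
   if (k : nat) == t.-1 then t.-1.+1 else if (k : nat) == t.-1.+1 then t.-1 else k.
  exact: tpermv.
rewrite tv; case/andP: tr => t0 _; rewrite prednK //.
by case: ifP => //; case: ifP.
Qed.

End Sig.

Lemma permcomp_tt r (s : 'S_r) (i j : 'I_r) :
  permcomp (permcomp s (tperm i j)) (tperm i j) = s.
Proof. by rewrite /permcomp mulgA tperm2 mul1g. Qed.

Lemma ltR_step r (s : 'S_r) i (h : i.+1 < r) :
  coxlen (permcomp s (sadj r i)) = (coxlen s).+1 -> ltR s (permcomp s (sadj r i)).
Proof.
move=> E; have [w [vw sw ws]] := words s.
split; last by move=> e; move: E; rewrite -e => /n_Sn.
exists w, [:: i]; split.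
  by split => //; rewrite coxlenE.
split.
- by move: vw; rewrite /validword all_cat => -> /=; rewrite h.
- by rewrite wordprod_cat ws /= /permcomp mul1g.
- by rewrite size_cat sw E coxlenE addn1.
Qed.

Theorem proposition2p26 (d n : nat) (C : seq (seq nat)) (t : nat) :
  1 <= d < n ->
  maxchain d n C ->
  1 <= t <= d * (n - d) - 1 ->
  (forall C', Fop d n C t = Some C' ->
     [/\ sigmaC d n C' = permcomp (sigmaC d n C) (sadj (d * (n - d)) t.-1),
         coxlen (sigmaC d n C') = (coxlen (sigmaC d n C)).+1
       & ltR (sigmaC d n C) (sigmaC d n C')]) /\
  (forall C', Eop d n C t = Some C' ->
     [/\ sigmaC d n C' = permcomp (sigmaC d n C) (sadj (d * (n - d)) t.-1),
         coxlen (sigmaC d n C') = (coxlen (sigmaC d n C)) - 1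
       & ltR (sigmaC d n C') (sigmaC d n C)]).
Proof.
move=> hdn mc ht.
have tr : 0 < t < d * (n - d) by lia.
case/andP: (tr) => t0 tr'.
set r := d * (n - d).
set x := at_ C t.-1; set a := sidx C t.-1; set b := sidx C t.
have ht1 : t.-1 < r by lia.
have [ha E1] := mc_step hdn mc ht1; rewrite prednK // in E1.
have [hb E2] := mc_step hdn mc tr'.
have gx : good d n x by apply: (mc_good hdn mc); rewrite (mc_size hdn mc); lia.
have [sx _ _] := gx.
have hts : t.-1.+1 < r by rewrite prednK.
set i1 : 'I_r := Ordinal (ltnW hts).
set i2 : 'I_r := Ordinal hts.
set s := sigmaC d n C.
have S1 : sidx (Cright d n) (s i1) = a.
  by have := congr1 (fun p => p.2.-1) (sigma_char hdn mc i1); rewrite /= => ->.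
have S2 : sidx (Cright d n) (s i2) = b.
  have := congr1 (fun p => p.2.-1) (sigma_char hdn mc i2); rewrite /= => ->.
  by rewrite /b /= prednK.
have tau_def : sadj r t.-1 = tperm i1 i2 by rewrite (sadjE hts).
have comm : forall (ab : a != b) (gz : good d n (inc x b)),
  sigmaC d n (set_nth [::] C t (inc x b)) = permcomp s (sadj r t.-1).
  by move=> ab gz; apply: sigma_swap.
split => C'.
- rewrite /Fop; case: ifP => // /andP[f4 lt] [<-].
  have [ab ip gz] := four_prop hdn mc tr f4; rewrite -/x -/a -/b in ab ip gz.
  rewrite ip in lt *; rewrite E1 in lt.
  have ba : b < a.
    case: (ltngtP a b) => // [abl|abe]; last by move: ab; rewrite abe eqxx.
    by move: (lexlt_asym lt); rewrite lexlt_inc ?sx.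
  have sl : s i1 < s i2.
    rewrite ltnNge; apply/negP => H.
    have := Cright_mono hdn H (ltn_ord (s i1)); rewrite S1 S2; lia.
  have cl : coxlen (permcomp s (sadj r t.-1)) = (coxlen s).+1.
    by rewrite tau_def !coxlenE L_right_up.
  rewrite comm //; split => //.
  exact: ltR_step.
- rewrite /Eop; case: ifP => // /andP[f4 lt] [<-].
  have [ab ip gz] := four_prop hdn mc tr f4; rewrite -/x -/a -/b in ab ip gz.
  rewrite ip in lt *; rewrite E1 in lt.
  have ba : a < b.
    case: (ltngtP a b) => // [abl|abe]; last by move: ab; rewrite abe eqxx.
    by move: (lexlt_asym lt); rewrite lexlt_inc ?sx.
  have sl : s i2 < s i1.
    rewrite ltnNge; apply/negP => H.
    have := Cright_mono hdn H (ltn_ord (s i2)); rewrite S1 S2; lia.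
  set s' := permcomp s (sadj r t.-1).
  have back : permcomp s' (sadj r t.-1) = s by rewrite /s' tau_def permcomp_tt.
  have cl : coxlen (permcomp s' (sadj r t.-1)) = (coxlen s').+1.
    rewrite tau_def !coxlenE L_right_up //.
    by rewrite /s' tau_def !permcompE tpermL tpermR.
  rewrite comm //; split => //.
    by rewrite -{2}back cl subn1.
  by have := ltR_step hts cl; rewrite back.
Qed.
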